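(* If the network $T$ is symmetric and the confirmation-bias network $T^*$ is strongly connected, then all agents have equal influence $s_i=1/n$ in $T$, and confirmation bias does not alter any agent's influence, i.e. $s^*_i=s_i=1/n$ for all $i$.
   Context: Agents $N=\{1,\dots,n\}$ communicate through a network $T$, an $n\times n$ row-stochastic matrix with entries $T_{ij}\in[0,1]$, assumed strongly connected and aperiodic. Each agent has an initial belief $x_{i0}\in[0,1]$. Confirmation bias of strength $q\in[0,1]$ (common to all agents) produces $T^*$: for $j\ne i$, if $|x_{i0}-x_{j0}|>1-q$ then $T^*_{ij}=0$ and $T_{ij}$ is added to the self-link $T^*_{ii}$; otherwise $T^*_{ij}=T_{ij}$. The influence vector $s$ of a network $P$ is the left eigenvector for eigenvalue $1$, normalized to sum to $1$: $s=sP$, i.e. $s_i=\sum_j P_{ji}s_j$; $s$ and $s^*$ denote the influence vectors of $T$ and $T^*$. *)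

(* Defs.v *)
From HB Require Import structures.
From mathcomp Require Import all_boot all_order all_algebra.
From mathcomp Require Import reals.
Set Implicit Arguments. Unset Strict Implicit. Unset Printing Implicit Defensive.
Import Order.TTheory GRing.Theory Num.Theory.
Local Open Scope ring_scope.

Section Defs.
Variable R : realType.
Variable n : nat.

Definition row_stochastic (T : 'M[R]_n) : Prop :=
  (forall i j, 0 <= T i j <= 1) /\ (forall i, \sum_j T i j = 1).

Definition net_rel (T : 'M[R]_n) : rel 'I_n := fun i j => 0 < T i j.

Definition strongly_connected (T : 'M[R]_n) : Prop :=
  forall i j, connect (net_rel T) i j.

(* k-th matrix power (defined for every n) *)
Definition mxpow (T : 'M[R]_n) (k : nat) : 'M[R]_n :=
  iter k (fun M => M *m T) 1%:M.

(* aperiodic: for every i, the gcd of the lengths of closed walks at i is 1 *)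
Definition aperiodic (T : 'M[R]_n) : Prop :=
  forall i, forall d : nat,
    (forall k : nat, (0 < k)%N -> 0 < mxpow T k i i -> (d %| k)%N) -> d = 1%N.

Definition symmetric_net (T : 'M[R]_n) : Prop := T^T = T.

Definition Tstar (T : 'M[R]_n) (x0 : 'I_n -> R) (q : R) : 'M[R]_n :=
  \matrix_(i, j)
    if i == j then
      T i i + \sum_(k | (k != i) && (1 - q < `|x0 i - x0 k|)) T i k
    else if 1 - q < `|x0 i - x0 j| then 0 else T i j.

Definition is_influence (P : 'M[R]_n) (s : 'rV[R]_n) : Prop :=
  s *m P = s /\ \sum_i s 0 i = 1.

End Defs.

(* Main.v *)
Require Import Defs.
From HB Require Import structures.
From mathcomp Require Import all_boot all_order all_algebra.
From mathcomp Require Import reals.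
Import Order.TTheory GRing.Theory Num.Theory.
Local Open Scope ring_scope.

Lemma sym_unif (R : realType) (n : nat) (hn : (0 < n)%N) (P : 'M[R]_n)
  (Hnn : forall i j, 0 <= P i j) (Hrow : forall i, \sum_j P i j = 1)
  (Hsym : forall i j, P i j = P j i) (Hsc : strongly_connected P) :
  forall s : 'rV[R]_n, is_influence P s <-> (forall i, s 0 i = n%:R^-1).
Proof.
have n0 : (n%:R : R) != 0 by rewrite pnatr_eq0 -lt0n.
move=> s; split.
- case=> Hs Hsum.
  have Hj : forall j, s 0 j = \sum_k P j k * s 0 k.
    move=> j; rewrite -{1}Hs mxE; apply: eq_bigr => k _.
    by rewrite Hsym mulrC.
  pose i0 : 'I_n := Ordinal hn.
  case: (@Order.TotalTheory.arg_maxP _ _ _ i0 xpredT (fun i => s 0 i) isT)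
    => im _ Hmax.
  set M := s 0 im.
  have step : forall i j, s 0 i = M -> 0 < P i j -> s 0 j = M.
    move=> i j Hi Hp.
    have H0 : \sum_k P i k * (M - s 0 k) = 0.
      under eq_bigr => k _ do rewrite mulrBr.
      by rewrite sumrB -mulr_suml Hrow mul1r -Hj Hi subrr.
    have Hge : forall k, true -> 0 <= P i k * (M - s 0 k).
      by move=> k _; rewrite mulr_ge0 // subr_ge0; exact: Hmax.
    have := psumr_eq0P Hge H0 isT (i:=j).
    move/eqP; rewrite mulf_eq0 (gt_eqF Hp) /= subr_eq0 => /eqP.
    by move=> ->.
  have Hpath : forall p x, s 0 x = M -> path (net_rel P) x p -> s 0 (last x p) = M.
    elim=> [|a p IH] x Hx //= /andP [Ha Hp].
    by apply: IH Hp; apply: (step x).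
  have Hall : forall j, s 0 j = M.
    move=> j; have /connectP [p Hp ->] := Hsc im j.
    exact: Hpath.
  have HM : \sum_i s 0 i = n%:R * M.
    by rewrite (eq_bigr (fun _ => M)) ?sumr_const ?card_ord ?mulr_natl // => i _; rewrite Hall.
  move=> i; rewrite Hall; rewrite Hsum in HM; by apply: (mulfI n0); rewrite mulfV // -HM.
- move=> Hs; split.
  + apply/rowP => j; rewrite mxE Hs.
    under eq_bigr => k _ do rewrite Hs Hsym.
    by rewrite -mulr_sumr Hrow mulr1.
  + under eq_bigr => i _ do rewrite Hs.
    by rewrite sumr_const card_ord -(mulr_natr (n%:R^-1)) mulVf.
Qed.

Theorem mainTheorem2 (R : realType) (n : nat) (hn : (0 < n)%N)
  (T : 'M[R]_n) (x0 : 'I_n -> R) (q : R)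
  (hT : row_stochastic T) (hsc : strongly_connected T) (hap : aperiodic T)
  (hx0 : forall i, 0 <= x0 i <= 1) (hq : 0 <= q <= 1)
  (hsym : symmetric_net T)
  (hscstar : strongly_connected (Tstar T x0 q)) :
  (forall s : 'rV[R]_n, is_influence T s <-> (forall i, s 0 i = n%:R^-1)) /\
  (forall s : 'rV[R]_n, is_influence (Tstar T x0 q) s <-> (forall i, s 0 i = n%:R^-1)).
Proof.
case: hT => Hb Hrow.
have Hnn : forall i j, 0 <= T i j by move=> i j; case/andP: (Hb i j).
have Hs : forall i j, T i j = T j i.
  by move=> i j; rewrite -{1}hsym mxE.
split; first exact: sym_unif.
apply: sym_unif => //.
- move=> i j; rewrite mxE; case: eqP => _.
  + by rewrite addr_ge0 // sumr_ge0.
  + by case: ifP.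
- move=> i; rewrite (bigD1 i) //= mxE eqxx -[X in _ = X](Hrow i) [X in _ = X](bigD1 i) //= -addrA.
  congr (_ + _).
  rewrite big_mkcondr -big_split /=; apply: eq_bigr => j Hj.
  rewrite mxE eq_sym (negbTE Hj).
  by case: ifP; rewrite ?add0r ?addr0.
- move=> i j; rewrite !mxE eq_sym; case: eqP => [->|_] //.
  by rewrite distrC Hs.
Qed.
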